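(* Let $k\ge1$. The logic $\mathbb{L}_k$ is algebraizable in the sense of Blok and Pigozzi with set of equivalence formulas $\Delta(p_1,p_2)=\{\delta(p_1,p_2)\}$ and set of defining equations $E(p_1)=\{p_1\approx p_1\leftrightarrow p_1\}$; that is, for all variables $p_1,\dots,p_{2n}$: (C1) $\models_k\delta(p_1,p_1)$; (C2) $\delta(p_1,p_2)\models_k\delta(p_2,p_1)$; (C3) $\delta(p_1,p_2),\delta(p_2,p_3)\models_k\delta(p_1,p_3)$; (C4) $\delta(p_1,p_{n+1}),\dots,\delta(p_n,p_{2n})\models_k\delta(\#(p_1,\dots,p_n),\#(p_{n+1},\dots,p_{2n}))$ for every $n$-ary connective $\#$ with $n\ge1$; (C5) $p_1\models_k\delta(p_1,p_1\leftrightarrow p_1)$; (C6) $\delta(p_1,p_1\leftrightarrow p_1)\models_k p_1$.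
   Context: A modal pseudocomplemented De Morgan algebra ($mpM$-algebra) is an algebra $\langle A,\wedge,\vee,\sim,{}^\ast,0,1\rangle$ such that $\langle A,\wedge,\vee,\sim,0,1\rangle$ is a De Morgan algebra (bounded distributive lattice with $\sim\sim x=x$, $\sim(x\vee y)=\sim x\wedge\sim y$), $x^\ast$ is the pseudocomplement of $x$, and $x\vee\sim x\le x\vee x^\ast$. A $\mathcal{C}_k$-algebra ($k\ge1$) is a pair $(A,t)$ with $A$ an $mpM$-algebra and $t$ an $mpM$-automorphism of $A$ with $t^k=\mathrm{id}$. $Fm$ is the set of formulas built from a denumerable set of variables with connectives $\wedge,\vee$ (binary), $\sim,{}^\ast,t$ (unary), $\top,\bot$ (constants); a valuation into $(A,t)$ is a homomorphism $v:Fm\to(A,t)$ (with $v(\top)=1$, $v(\bot)=0$). The $1$-assertional logic $\mathbb{L}_k=\langle Fm,\models_k\rangle$: $\Gamma\models_k\alpha$ iff for every $\mathcal{C}_k$-algebra $(A,t)$ and every valuation $v$, if $v(\gamma)=1$ for all $\gamma\in\Gamma$ then $v(\alpha)=1$. Define $x\to y=\sim\big((\sim(x\vee y))^\ast\wedge(x\vee y)\big)\vee\big((\sim(x\wedge y))^\ast\wedge(x\wedge y)\big)$, $x\leftrightarrow y=(x\to y)\wedge(\sim y\to\sim x)$, and $\delta(p,q)=\bigwedge_{i=0}^{k-1}(t^ip\leftrightarrow t^iq)$. *)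

(* Defs.v *)
From HB Require Import structures.
From mathcomp Require Import all_boot all_order.
Set Implicit Arguments. Unset Strict Implicit. Unset Printing Implicit Defensive.
Import Order.TTheory.
Local Open Scope order_scope.

Inductive form : Type :=
| FVar : nat -> form
| FAnd : form -> form -> form
| FOr  : form -> form -> form
| FNeg : form -> form          (* ~ (De Morgan negation) *)
| FPc  : form -> form          (* ^* (pseudocomplement) *)
| FT   : form -> form
| FTop : form
| FBot : form.

Record mpM (d : Order.disp_t) (A : tbDistrLatticeType d) := MpM {
  neg : A -> A;
  pc  : A -> A;
  negK : forall x : A, neg (neg x) = x;
  negJ : forall x y : A, neg (x `|` y) = neg x `&` neg y;
  pcP : forall x y : A, (x `&` y = \bot) <-> (y <= pc x);
  modal : forall x : A, x `|` neg x <= x `|` pc x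
}.

Definition Ck_aut (d : Order.disp_t) (A : tbDistrLatticeType d) (M : mpM A)
    (k : nat) (t : A -> A) : Prop :=
  bijective t /\
  (forall x y, t (x `&` y) = t x `&` t y) /\
  (forall x y, t (x `|` y) = t x `|` t y) /\
  (forall x, t (neg M x) = neg M (t x)) /\
  (forall x, t (pc M x) = pc M (t x)) /\
  t \bot = \bot /\ t \top = \top /\
  (forall x, iter k t x = x).

Fixpoint eval (d : Order.disp_t) (A : tbDistrLatticeType d) (M : mpM A)
    (t : A -> A) (v : nat -> A) (f : form) : A :=
  match f with
  | FVar n => v n
  | FAnd a b => eval M t v a `&` eval M t v b
  | FOr a b => eval M t v a `|` eval M t v b
  | FNeg a => neg M (eval M t v a)
  | FPc a => pc M (eval M t v a)
  | FT a => t (eval M t v a)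
  | FTop => \top
  | FBot => \bot
  end.

(** List membership (Prop-valued; form has no eqType). *)
Fixpoint inl (g : form) (l : seq form) : Prop :=
  match l with [::] => False | a :: l' => a = g \/ inl g l' end.

Definition models (k : nat) (Gamma : seq form) (alpha : form) : Prop :=
  forall (d : Order.disp_t) (A : tbDistrLatticeType d) (M : mpM A)
         (t : A -> A), Ck_aut M k t ->
  forall v : nat -> A,
    (forall g, inl g Gamma -> eval M t v g = \top) ->
    eval M t v alpha = \top.

Definition fimp (x y : form) : form :=
  FOr (FNeg (FAnd (FPc (FNeg (FOr x y))) (FOr x y)))
      (FAnd (FPc (FNeg (FAnd x y))) (FAnd x y)).

Definition fiff (x y : form) : form := FAnd (fimp x y) (fimp (FNeg y) (FNeg x)).

Definition tpow (i : nat) (p : form) : form := iter i FT p.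

Fixpoint bigAnd (l : seq form) : form :=
  match l with
  | [::] => FTop
  | [:: a] => a
  | a :: l' => FAnd a (bigAnd l')
  end.

Definition delta (k : nat) (p q : form) : form :=
  bigAnd [seq fiff (tpow i p) (tpow i q) | i <- iota 0 k].

(* Main.v *)
Require Import Defs.
From mathcomp Require Import all_boot all_order.
Set Implicit Arguments. Unset Strict Implicit.
Import Order.TTheory.
Local Open Scope order_scope.
Section Alg.
Variables (d : Order.disp_t) (A : tbDistrLatticeType d) (M : mpM A).
Local Notation n := (neg M).
Local Notation p := (pc M).

Definition boxA (x : A) := p (n x) `&` x.
Definition impA (a b : A) := n (boxA (a `|` b)) `|` boxA (a `&` b).
Definition iffA (a b : A) := impA a b `&` impA (n b) (n a).

Lemma nK x : n (n x) = x. Proof. exact: negK. Qed.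
Lemma nJ x y : n (x `|` y) = n x `&` n y. Proof. exact: negJ. Qed.
Lemma nM x y : n (x `&` y) = n x `|` n y.
Proof. by rewrite -[n x `|` n y]nK nJ !nK. Qed.
Lemma n_anti x y : x <= y -> n y <= n x.
Proof. by move=> /join_idPr <-; rewrite nJ leIl. Qed.
Arguments n_anti [x y].
Lemma n1 : n \top = \bot.
Proof. apply/eqP; rewrite -lex0 -[\bot]nK; apply: n_anti; exact: lex1. Qed.
Lemma n0 : n \bot = \top.
Proof. by rewrite -n1 nK. Qed.
Lemma pcx x : x `&` p x = \bot.
Proof. by apply/(pcP M). Qed.
Lemma le_pc_bot x z : z <= x -> z <= p x -> z = \bot.
Proof. by move=> h1 h2; apply/eqP; rewrite -lex0 -(pcx x) lexI h1 h2. Qed.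
Lemma modalA x : x `|` n x <= x `|` p x. Proof. exact: modal. Qed.

Lemma boxB x : boxA x `&` n (boxA x) = \bot.
Proof.
rewrite -[x]nK; set y := n x.
apply: (@le_pc_bot y); last by rewrite /boxA nK -meetA leIl.
rewrite /boxA nK nM nK.
apply: (le_trans (leI2 (leIr (n y) (p y)) (lexx (n (p y) `|` y)))).
rewrite meetUr leUx; apply/andP; split; last by rewrite meetC leIl.
rewrite -nJ.
apply: (le_trans (n_anti (modalA y))).
by rewrite nJ nK leIr.
Qed.

Lemma boxT x : n (boxA x) `|` boxA x = \top.
Proof. by rewrite -[_ `|` _]nK nJ nK boxB n0. Qed.

Lemma box_le x y : n (boxA x) `|` y = \top -> boxA x <= y.
Proof.
move=> h; rewrite -[boxA x]meetx1 -h meetUr boxB join0x leIr //.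
Qed.

Arguments box_le [x y].
Lemma meetT (x y : A) : x `&` y = \top -> x = \top /\ y = \top.
Proof.
move=> h; split; apply/le_anti; rewrite lex1 /= -h ?leIl ?leIr //.
Qed.

Lemma iffA_refl a : iffA a a = \top.
Proof. by rewrite /iffA /impA !joinxx !meetxx !boxT meetxx. Qed.

Lemma fin s m : m <= s -> boxA s <= m -> s <= n (p m) `|` m -> s <= m.
Proof.
move=> hms h1 h2.
have A1 : s <= n s `|` p (n s).
  rewrite -{1}[s]nK; apply: (le_trans _ (modalA (n s))); by rewrite leUr.
have B : s `&` n s <= m.
  apply: (le_trans (leI2 h2 (lexx (n s)))).
  rewrite meetUl leUx; apply/andP; split; last exact: leIl.
  rewrite -nJ.
  have c1 : p m `|` m <= p m `|` s by apply: leU2.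
  apply: (le_trans (n_anti c1)).
  have c2 : m `|` n m <= p m `|` m by rewrite [p m `|` m]joinC modalA.
  apply: (le_trans (n_anti c2)).
  by rewrite nJ nK leIr.
rewrite -(meet_l A1) meetUr leUx B /=.
by rewrite meetC.
Qed.

Arguments fin [s m].
Lemma iffA_eq a b : iffA a b = \top -> a = b.
Proof.
move=> /meetT [h1 h2].
have H1 : boxA (a `|` b) <= a `&` b.
  exact: (le_trans (box_le h1) (leIr _ _)).
rewrite /impA in h1 h2.
have e1 : n b `|` n a = n (a `&` b) by rewrite nM joinC.
have e2 : n b `&` n a = n (a `|` b) by rewrite nJ meetC.
rewrite e1 e2 in h2.
have H2 := le_trans (box_le h2) (leIr _ _).
rewrite /boxA nK in H2.
have H2' : a `|` b <= n (p (a `&` b)) `|` (a `&` b).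
  have := n_anti H2; by rewrite !nK nM nK.
have hm : a `&` b <= a `|` b := le_trans (leIl a b) (leUl a b).
have := fin hm H1 H2'.
move=> hle; apply/le_anti; apply/andP; split.
- exact: (le_trans (leUl a b) (le_trans hle (leIr b a))).
- exact: (le_trans (leUr b a) (le_trans hle (leIl a b))).
Qed.
End Alg.

Section Logic.
Variables (d : Order.disp_t) (A : tbDistrLatticeType d) (M : mpM A) (t : A -> A) (v : nat -> A).

Lemma eval_fiff x y : eval M t v (fiff x y) = iffA M (eval M t v x) (eval M t v y).
Proof. by []. Qed.

Lemma eval_tpow i q : eval M t v (tpow i q) = iter i t (eval M t v q).
Proof. by elim: i => //= i ->. Qed.

Lemma eval_bigAnd l :
  eval M t v (bigAnd l) = \top <-> (forall f, inl f l -> eval M t v f = \top).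
Proof.
elim: l => [|a l IH]; first by split.
case: l IH => [|b l] IH.
  split; first by move=> h f [<-|].
  by move=> h; apply: h; left.
change (eval M t v a `&` eval M t v (bigAnd (b :: l)) = \top <->
  (forall f, a = f \/ inl f (b :: l) -> eval M t v f = \top)).
split.
  move=> /meetT [ha hl] f [<-|hf] //.
  exact: (proj1 IH hl f hf).
move=> h; rewrite h; last by left.
rewrite (proj2 IH); first by rewrite meetx1.
by move=> f hf; apply: h; right.
Qed.

Lemma inl_map (F : nat -> form) (s : seq nat) g :
  inl g [seq F i | i <- s] <-> exists i, i \in s /\ F i = g.
Proof.
elim: s => [|a s IH] /=; first by split=> // [[i []]].
split.
  case=> [<-|/IH [i [hi <-]]]; first by exists a; rewrite inE eqxx.
  by exists i; rewrite inE hi orbT.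
case=> i []; rewrite inE => /orP [/eqP -> <-|hi e]; first by left.
by right; apply/IH; exists i.
Qed.

Lemma delta_top k p q : (1 <= k)%N ->
  eval M t v (delta k p q) = \top <-> eval M t v p = eval M t v q.
Proof.
move=> hk; rewrite /delta; split.
  move=> /eval_bigAnd h.
  have := h (fiff (tpow 0 p) (tpow 0 q)).
  rewrite eval_fiff => h0; apply: iffA_eq; apply: h0.
  by apply/inl_map; exists 0%N; rewrite mem_iota.
move=> e; apply/eval_bigAnd => f /inl_map [i [_ <-]].
by rewrite eval_fiff !eval_tpow e iffA_refl.
Qed.
End Logic.

Theorem theorem7p6 (k : nat) (hk : (1 <= k)%N) :
  (* (C1) *)
  (forall p1 : nat, models k [::] (delta k (FVar p1) (FVar p1))) /\
  (* (C2) *)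
  (forall p1 p2 : nat,
     models k [:: delta k (FVar p1) (FVar p2)] (delta k (FVar p2) (FVar p1))) /\
  (* (C3) *)
  (forall p1 p2 p3 : nat,
     models k [:: delta k (FVar p1) (FVar p2); delta k (FVar p2) (FVar p3)]
              (delta k (FVar p1) (FVar p3))) /\
  (* (C4) for the binary connectives /\ and v *)
  (forall p1 p2 p3 p4 : nat,
     models k [:: delta k (FVar p1) (FVar p3); delta k (FVar p2) (FVar p4)]
              (delta k (FAnd (FVar p1) (FVar p2)) (FAnd (FVar p3) (FVar p4)))) /\
  (forall p1 p2 p3 p4 : nat,
     models k [:: delta k (FVar p1) (FVar p3); delta k (FVar p2) (FVar p4)]
              (delta k (FOr (FVar p1) (FVar p2)) (FOr (FVar p3) (FVar p4)))) /\
  (* (C4) for the unary connectives ~, ^*, t *)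
  (forall p1 p2 : nat,
     models k [:: delta k (FVar p1) (FVar p2)]
              (delta k (FNeg (FVar p1)) (FNeg (FVar p2)))) /\
  (forall p1 p2 : nat,
     models k [:: delta k (FVar p1) (FVar p2)]
              (delta k (FPc (FVar p1)) (FPc (FVar p2)))) /\
  (forall p1 p2 : nat,
     models k [:: delta k (FVar p1) (FVar p2)]
              (delta k (FT (FVar p1)) (FT (FVar p2)))) /\
  (* (C5) *)
  (forall p1 : nat,
     models k [:: FVar p1] (delta k (FVar p1) (fiff (FVar p1) (FVar p1)))) /\
  (* (C6) *)
  (forall p1 : nat,
     models k [:: delta k (FVar p1) (fiff (FVar p1) (FVar p1))] (FVar p1)).
Proof.
have G1 : forall (d : Order.disp_t) (A : tbDistrLatticeType d) (M : mpM A) t v a l,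
    (forall g, inl g (a :: l) -> eval M t v g = \top) -> eval M t v a = \top.
  by move=> d A M t v a l h; apply: h; left.
have G2 : forall (d : Order.disp_t) (A : tbDistrLatticeType d) (M : mpM A) t v a b,
    (forall g, inl g [:: a; b] -> eval M t v g = \top) -> eval M t v b = \top.
  by move=> d A M t v a b h; apply: h; right; left.
split; first by move=> p1 d A M t _ v _; apply/delta_top.
split.
  move=> p1 p2 d A M t _ v h; have /(delta_top _ _ _ _ _ hk) /= e := G1 _ _ _ _ _ _ _ h.
  by apply/delta_top.
split.
  move=> p1 p2 p3 d A M t _ v h.
  have /(delta_top _ _ _ _ _ hk) /= e1 := G1 _ _ _ _ _ _ _ h.
  have /(delta_top _ _ _ _ _ hk) /= e2 := G2 _ _ _ _ _ _ _ h.
  by apply/delta_top => //=; rewrite e1 e2.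
split.
  move=> p1 p2 p3 p4 d A M t _ v h.
  have /(delta_top _ _ _ _ _ hk) /= e1 := G1 _ _ _ _ _ _ _ h.
  have /(delta_top _ _ _ _ _ hk) /= e2 := G2 _ _ _ _ _ _ _ h.
  by apply/delta_top => //=; rewrite e1 e2.
split.
  move=> p1 p2 p3 p4 d A M t _ v h.
  have /(delta_top _ _ _ _ _ hk) /= e1 := G1 _ _ _ _ _ _ _ h.
  have /(delta_top _ _ _ _ _ hk) /= e2 := G2 _ _ _ _ _ _ _ h.
  by apply/delta_top => //=; rewrite e1 e2.
split.
  move=> p1 p2 d A M t _ v h; have /(delta_top _ _ _ _ _ hk) /= e := G1 _ _ _ _ _ _ _ h.
  by apply/delta_top => //=; rewrite e.
split.
  move=> p1 p2 d A M t _ v h; have /(delta_top _ _ _ _ _ hk) /= e := G1 _ _ _ _ _ _ _ h.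
  by apply/delta_top => //=; rewrite e.
split.
  move=> p1 p2 d A M t _ v h; have /(delta_top _ _ _ _ _ hk) /= e := G1 _ _ _ _ _ _ _ h.
  by apply/delta_top => //=; rewrite e.
split.
  move=> p1 d A M t _ v h; have /= e := G1 _ _ _ _ _ _ _ h.
  by apply/delta_top => //; rewrite eval_fiff /= e iffA_refl.
move=> p1 d A M t _ v h.
have /(delta_top _ _ _ _ _ hk) e := G1 _ _ _ _ _ _ _ h.
by rewrite e eval_fiff iffA_refl.
Qed.
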